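(* Let $Q$ be a $D$-dimensional convex polytope in $\mathbb{R}^D$ with $m$ vertices. Then $Q$ is locally point symmetric if and only if $Q$ has exactly $m/2$ (unordered) pairs of strictly antipodal vertices.
   Context: $Q$ is $D$-dimensional means its affine hull is $\mathbb{R}^D$. Two vertices $\mathbf{u},\mathbf{v}$ of a convex polytope $Q$ are strictly antipodal if there exist parallel supporting hyperplanes $H_1,H_2$ of $Q$ with $H_1\cap Q=\{\mathbf{u}\}$ and $H_2 \cap Q = \{\mathbf{v}\}$. The supporting cone of $Q$ at a vertex $\mathbf{v}$ is $C(\mathbf{v}) = \mathbf{v} + \bigcup_{\lambda \ge 0}\lambda(Q - \mathbf{v})$. A convex polytope $Q$ with $m$ vertices is locally point symmetric if its vertices can be partitioned into $m/2$ pairs of strictly antipodal vertices such that for each pair $\{\mathbf{u},\mathbf{v}\}$, $C(\mathbf{u}) - \mathbf{u} = \mathbf{v} - C(\mathbf{v})$. *)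

(* Defs.v *)
From mathcomp Require Import all_boot all_order all_algebra.
From mathcomp Require Import boolp classical_sets.
From mathcomp Require Import finmap.

Set Implicit Arguments.
Unset Strict Implicit.
Unset Printing Implicit Defensive.

Import Order.TTheory GRing.Theory Num.Theory.
Local Open Scope ring_scope.
Local Open Scope classical_set_scope.

Section Polytopes.
Variables (R : realFieldType) (D : nat).
Notation point := 'rV[R]_D.

Definition dotp (a x : point) : R := \sum_(i < D) a 0 i * x 0 i.

Definition conv (A : set point) : set point :=
  [set x | exists (n : nat) (p : 'I_n -> point) (w : 'I_n -> R),
      [/\ forall i, A (p i), forall i, 0 <= w i, \sum_i w i = 1
        & x = \sum_i w i *: p i]].

Definition affine_hull (A : set point) : set point :=
  [set x | exists (n : nat) (p : 'I_n -> point) (w : 'I_n -> R),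
      [/\ forall i, A (p i), \sum_i w i = 1 & x = \sum_i w i *: p i]].

Definition is_polytope (Q : set point) : Prop :=
  exists S : seq point, Q = conv [set x | x \in S].

Definition full_dim (Q : set point) : Prop := affine_hull Q = setT.

Definition is_vertex (Q : set point) (v : point) : Prop :=
  Q v /\ forall x y (t : R), Q x -> Q y -> 0 < t < 1 ->
    v = t *: x + (1 - t) *: y -> x = v /\ y = v.

Definition hyperplane (a : point) (b : R) : set point := [set x | dotp a x = b].

Definition supporting (Q : set point) (a : point) (b : R) : Prop :=
  a != 0 /\
  ((forall x, Q x -> dotp a x <= b) \/ (forall x, Q x -> b <= dotp a x)) /\
  (exists x, Q x /\ dotp a x = b).

Definition strictly_antipodal (Q : set point) (u v : point) : Prop :=
  exists (a1 a2 : point) (b1 b2 : R) (c : R),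
    [/\ supporting Q a1 b1, supporting Q a2 b2,
        (c != 0 /\ a2 = c *: a1),
        hyperplane a1 b1 <> hyperplane a2 b2
      & (hyperplane a1 b1 `&` Q = [set u] /\
         hyperplane a2 b2 `&` Q = [set v])].

Definition supp_cone (Q : set point) (v : point) : set point :=
  [set x | exists (lam : R) (q : point), [/\ 0 <= lam, Q q & x = v + lam *: (q - v)]].

(* Locally point symmetric, given the (finite) vertex set V of Q with m = #|V|
   vertices: V is partitioned into pairs {u, p u} (p a fixed-point-free
   involution of V) of strictly antipodal vertices with
   C(u) - u = v - C(v). *)
Definition locally_point_symmetric (Q : set point) (V : {fset point}) : Prop :=
  exists p : point -> point,
    forall u, u \in V ->
      [/\ p u \in V, p u != u, p (p u) = u,
          strictly_antipodal Q u (p u)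
        & [set x | exists2 c, supp_cone Q u c & x = c - u] =
          [set x | exists2 c, supp_cone Q (p u) c & x = p u - c]].

Definition antipodal_pairs (Q : set point) (V : {fset point}) : {fset {fset point}} :=
  [fset [fset u; v]%fset | u in V, v in V & `[< strictly_antipodal Q u v >]]%fset.

End Polytopes.

(* Main.v *)
Require Import Defs.
From mathcomp Require Import all_boot all_order all_algebra.
From mathcomp Require Import boolp classical_sets reals.
From mathcomp Require Import finmap.
From mathcomp Require Import ring lra.
Import Order.TTheory GRing.Theory Num.Theory.
Local Open Scope ring_scope.
Local Open Scope classical_set_scope.

Set Implicit Arguments.
Unset Strict Implicit.
Unset Printing Implicit Defensive.


Section Dot.
Variable R : realType.
Variable n : nat.
Implicit Types a b x y : 'rV[R]_n.

Lemma dotpDl a b x : dotp (a + b) x = dotp a x + dotp b x.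
Proof. rewrite /dotp -big_split /=; apply: eq_bigr => i _; rewrite mxE; ring. Qed.
Lemma dotpDr a x y : dotp a (x + y) = dotp a x + dotp a y.
Proof. rewrite /dotp -big_split /=; apply: eq_bigr => i _; rewrite mxE; ring. Qed.
Lemma dotpZl k a x : dotp (k *: a) x = k * dotp a x.
Proof. rewrite /dotp mulr_sumr; apply: eq_bigr => i _; rewrite mxE; ring. Qed.
Lemma dotpZr k a x : dotp a (k *: x) = k * dotp a x.
Proof. rewrite /dotp mulr_sumr; apply: eq_bigr => i _; rewrite mxE; ring. Qed.
Lemma dotpNl a x : dotp (- a) x = - dotp a x.
Proof. by rewrite -scaleN1r dotpZl mulN1r. Qed.
Lemma dotpNr a x : dotp a (- x) = - dotp a x.
Proof. by rewrite -scaleN1r dotpZr mulN1r. Qed.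
Lemma dotpBl a b x : dotp (a - b) x = dotp a x - dotp b x.
Proof. by rewrite dotpDl dotpNl. Qed.
Lemma dotpBr a x y : dotp a (x - y) = dotp a x - dotp a y.
Proof. by rewrite dotpDr dotpNr. Qed.
Lemma dotp0l x : dotp 0 x = 0.
Proof. by rewrite /dotp big1 // => i _; rewrite mxE mul0r. Qed.
Lemma dotp0r x : dotp x 0 = 0.
Proof. by rewrite /dotp big1 // => i _; rewrite mxE mulr0. Qed.
Lemma dotpC a x : dotp a x = dotp x a.
Proof. by rewrite /dotp; apply: eq_bigr => i _; rewrite mulrC. Qed.
Lemma dotp_sum m (w : 'I_m -> R) (p : 'I_m -> 'rV[R]_n) a :
  dotp a (\sum_i w i *: p i) = \sum_i w i * dotp a (p i).
Proof.
elim: m w p => [|m IH] w p; first by rewrite !big_ord0 dotp0r.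
by rewrite !big_ord_recl dotpDr dotpZr IH.
Qed.
Lemma dotp_sumr (I : Type) (r : seq I) (F : I -> 'rV[R]_n) a :
  dotp a (\sum_(i <- r) F i) = \sum_(i <- r) dotp a (F i).
Proof.
elim: r => [|i r IH]; first by rewrite !big_nil dotp0r.
by rewrite !big_cons dotpDr IH.
Qed.
Lemma dotpxx_ge0 x : 0 <= dotp x x.
Proof. by rewrite /dotp sumr_ge0 // => i _; rewrite -expr2 sqr_ge0. Qed.
Lemma dotpxx_gt0 x : x != 0 -> 0 < dotp x x.
Proof.
move=> xn0; rewrite lt_def dotpxx_ge0 andbT; apply/negP => /eqP H.
move/eqP: xn0; apply; apply/rowP => i; rewrite mxE.
have := @psumr_eq0P R _ xpredT (fun i => x 0 i * x 0 i).
move=> /(_ (fun i _ => ltac:(by rewrite -expr2 sqr_ge0)) H i isT) /eqP.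
by rewrite mulf_eq0 orbb => /eqP.
Qed.
End Dot.


Section Farkas.
Variable R : realType.
Variable n : nat.
Notation rv := 'rV[R]_n.

Fixpoint in_cone (s : seq rv) (x : rv) : Prop :=
  match s with
  | [::] => x = 0
  | z :: s' => exists2 mu : R, 0 <= mu & in_cone s' (x - mu *: z)
  end.

Lemma map_cone (g z : rv) (a : R) (s : seq rv) : a != 0 ->
  (forall y, y \in s -> 0 <= dotp g y) ->
  forall x', in_cone (map (fun y => a *: y - dotp g y *: z) s) x' ->
  exists2 t : R, 0 <= t & in_cone s (a^-1 *: (x' + t *: z)).
Proof.
move=> a0; elim: s => [|y s IH] gs x' /=.
  by move=> ->; exists 0 => //; rewrite scale0r addr0 scaler0.
have gy := gs y (mem_head _ _).
case=> mu mu0 /IH [|t t0 H]; first by move=> y' ys; apply: gs; rewrite inE ys orbT.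
exists (t + mu * dotp g y).
  by rewrite addr_ge0 // ?mulr_ge0.
exists mu => //; congr (in_cone s _): H; apply/rowP => i; rewrite !mxE; field; exact: a0.
Qed.
End Farkas.
Section Farkas2.
Variable R : realType.
Variable n : nat.
Notation rv := 'rV[R]_n.

Lemma farkas_size k : forall (s : seq rv) x, size s = k -> ~ in_cone s x ->
  exists g : rv, (forall y, y \in s -> 0 <= dotp g y) /\ dotp g x < 0.
Proof.
elim: k => [|k IH] s x.
  case: s => // _ /= xn0; exists (- x); split => // .
  rewrite dotpNl oppr_lt0; apply: dotpxx_gt0; exact/eqP.
case: s => // z s /= [] sk Hn.
have [g [gs gx]] : exists g : rv, (forall y, y \in s -> 0 <= dotp g y) /\ dotp g x < 0.
  apply: IH => // Hc; apply: Hn; exists 0 => //; by rewrite scale0r subr0.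
have [gz|gz] := leP 0 (dotp g z).
  exists g; split => // y; rewrite inE => /orP [/eqP -> //|]; exact: gs.
set a := dotp g z.
have a0 : a != 0 by rewrite lt_eqF.
set f := fun y => a *: y - dotp g y *: z.
set x' := a *: x - dotp g x *: z.
have [h [hs hx]] : exists h : rv,
    (forall y, y \in map f s -> 0 <= dotp h y) /\ dotp h x' < 0.
  apply: IH; first by rewrite size_map.
  move=> /(map_cone a0 gs) [t t0 Hc]; apply: Hn.
  exists ((dotp g x - t) / a).
    apply: mulr_le0; first lra.
    by rewrite invr_le0 ltW.
  congr (in_cone s _): Hc; apply/rowP => i; rewrite /x' !mxE; field; exact: a0.
exists (a *: h - dotp h z *: g); split.
  move=> y; rewrite inE => /orP [/eqP ->|ys].
    by rewrite dotpBl !dotpZl -/a mulrC subrr.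
  have := hs (f y) (map_f f ys).
  by rewrite /f dotpBl !dotpZl dotpBr !dotpZr [dotp g y * _]mulrC.
by move: hx; rewrite /x' dotpBr !dotpZr dotpBl !dotpZl [dotp g x * _]mulrC.
Qed.

Lemma farkas (s : seq rv) x : ~ in_cone s x ->
  exists g : rv, (forall y, y \in s -> 0 <= dotp g y) /\ dotp g x < 0.
Proof. exact: farkas_size. Qed.

Lemma in_cone_index (s : seq rv) x : in_cone s x ->
  exists m (p : 'I_m -> rv) (w : 'I_m -> R),
    [/\ forall i, p i \in s, forall i, 0 <= w i & x = \sum_i w i *: p i].
Proof.
elim: s x => [|z s IH] x /=.
  by move=> ->; exists 0%N, (fun _ => 0), (fun _ => 0); split => [[]|[]|]; rewrite ?big_ord0.
case=> mu mu0 /IH [m [p [w [ps w0 E]]]].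
exists m.+1, (fun i => if unlift ord0 i is Some j then p j else z),
  (fun i => if unlift ord0 i is Some j then w j else mu); split.
- move=> i; case: unliftP => [j _|_]; last exact: mem_head.
  by rewrite inE ps orbT.
- by move=> i; case: unliftP.
rewrite big_ord_recl /= unlift_none.
under eq_bigr do rewrite liftK.
by rewrite -E addrC subrK.
Qed.

End Farkas2.


Section Eps.
Variable R : realType.
Variable T : eqType.

Lemma small_eps (P : pred T) (F G : T -> R) (s : seq T) :
  (forall x, x \in s -> P x -> 0 < G x) ->
  exists2 e : R, 0 < e & forall e', 0 < e' -> e' <= e ->
     forall x, x \in s -> P x -> e' * F x < G x.
Proof.
elim: s => [|x s IH] Hs.
  by exists 1 => // e' _ _ x; rewrite in_nil.
have [e e0 He] : exists2 e : R, 0 < e & forall e', 0 < e' -> e' <= e ->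
     forall y, y \in s -> P y -> e' * F y < G y.
  by apply: IH => y ys; apply: Hs; rewrite inE ys orbT.
case Px: (P x); last first.
  exists e => // e' e'0 e'e y; rewrite inE => /orP [/eqP ->|ys]; first by rewrite Px.
  exact: He.
have Gx := Hs x (mem_head _ _) Px.
set k := `|F x| + 1.
have k0 : 0 < k by rewrite /k ltr_wpDl.
exists (Order.min e (G x / k)).
  by rewrite lt_min e0 divr_gt0.
move=> e' e'0; rewrite le_min => /andP [e'e e'G] y; rewrite inE => /orP [/eqP ->|ys]; last first.
  exact: He.
move=> _.
have h1 : e' * k <= G x by rewrite -ler_pdivlMr.
have h2 : F x <= `|F x| := ler_norm _.
rewrite /k in h1; nra.
Qed.

Lemma argmin_seq (f : T -> R) (s : seq T) x0 : x0 \in s ->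
  exists2 x, x \in s & forall y, y \in s -> f x <= f y.
Proof.
elim: s x0 => [x0|z s IH x0 _]; first by rewrite in_nil.
case: s IH => [|z' s'] IH.
  by exists z; rewrite ?mem_head // => y; rewrite inE => /eqP ->.
have [x xs Hx] := IH z' (mem_head _ _).
have [fz|fz] := leP (f z) (f x).
  exists z; first exact: mem_head.
  move=> y; rewrite inE => /orP [/eqP ->//|ys]; exact: le_trans fz (Hx _ ys).
exists x; first by rewrite inE xs orbT.
move=> y; rewrite inE => /orP [/eqP ->|ys]; [exact: ltW | exact: Hx].
Qed.
End Eps.


Section Poly.
Variable R : realType.
Variable D : nat.
Notation pt := 'rV[R]_D.

Definition cv (S : seq pt) : set pt := conv [set x | x \in S].
Definition umax (Q : set pt) (a u : pt) :=
  Q u /\ forall q, Q q -> q <> u -> dotp a q < dotp a u.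

Lemma in_cv (S : seq pt) s : s \in S -> cv S s.
Proof.
move=> sS; exists 1%N, (fun _ => s), (fun _ => 1); split => //.
- by rewrite big_ord1.
- by rewrite big_ord1 scale1r.
Qed.

Lemma cv_le (S : seq pt) a M q : (forall s, s \in S -> dotp a s <= M) ->
  cv S q -> dotp a q <= M.
Proof.
move=> HS [m [p [w [pS w0 w1 ->]]]].
rewrite dotp_sum -[M]mul1r -w1 mulr_suml; apply: ler_sum => i _.
by apply: ler_wpM2l => //; apply: HS; apply: pS.
Qed.

Lemma cv_umax (S : seq pt) a u : cv S u ->
  (forall s, s \in S -> s <> u -> dotp a s < dotp a u) -> umax (cv S) a u.
Proof.
move=> Hu HS; split => // q [m [p [w [pS w0 w1 qE]]]] qu.
rewrite ltNge; apply/negP => Hle; apply: qu.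
have F0 : forall i, 0 <= w i * (dotp a u - dotp a (p i)).
  move=> i; apply: mulr_ge0 => //; rewrite subr_ge0.
  have [->|pu] := eqVneq (p i) u => //.
  by apply/ltW/HS => //; [apply: pS | apply/eqP].
have Fs : \sum_i w i * (dotp a u - dotp a (p i)) = 0.
  apply/le_anti; rewrite sumr_ge0 // andbT.
  have -> : \sum_i w i * (dotp a u - dotp a (p i)) = dotp a u - dotp a q.
    rewrite qE dotp_sum -[X in X - _]mul1r -w1 mulr_suml -sumrB.
    by apply: eq_bigr => i _; rewrite mulrBr.
  by rewrite subr_le0.
rewrite qE; transitivity (\sum_i w i *: u); last by rewrite -scaler_suml w1 scale1r.
apply: eq_bigr => i _.
have [->//|pu] := eqVneq (p i) u.
have := psumr_eq0P (fun i _ => F0 i) Fs (isT : xpredT i).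
move/eqP; rewrite mulf_eq0 subr_eq0 => /orP [/eqP ->|]; first by rewrite !scale0r.
by move=> /eqP E; have := HS _ (pS i) (elimN eqP pu); rewrite E ltxx.
Qed.

Lemma umax_vertex (Q : set pt) a u : umax Q a u -> is_vertex Q u.
Proof.
move=> [Qu Hu]; split => // x y t Qx Qy /andP [t0 t1] E.
have Hxy : forall z, Q z -> dotp a z <= dotp a u.
  move=> z Qz; have [->//|zu] := eqVneq z u; apply/ltW/Hu => //; exact/eqP.
have ax := Hxy x Qx; have ay := Hxy y Qy.
have Eu : dotp a u = t * dotp a x + (1 - t) * dotp a y.
  by rewrite {1}E dotpDr !dotpZr.
have xu : x = u.
  apply/eqP/negP => /negP /eqP xu; have := Hu x Qx xu; nra.
split => //; apply/eqP/negP => /negP /eqP yu; have := Hu y Qy yu; nra.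
Qed.

Lemma in_conv1 (A : set pt) x : A x -> conv A x.
Proof.
move=> Ax; exists 1%N, (fun _ => x), (fun _ => 1); split => //.
- by rewrite big_ord1.
- by rewrite big_ord1 scale1r.
Qed.

Lemma ext_comb (A : set pt) u : is_vertex (conv A) u ->
  forall m (p : 'I_m -> pt) (w : 'I_m -> R), (forall i, A (p i)) ->
  (forall i, 0 <= w i) -> \sum_i w i = 1 -> u = \sum_i w i *: p i ->
  exists i, p i = u.
Proof.
move=> Hv; elim => [|m IH] p w pA w0 w1 uE.
  by move: w1; rewrite big_ord0 => /eqP; rewrite eq_sym oner_eq0.
have [p0u|p0u] := eqVneq (p ord0) u; first by exists ord0.
rewrite big_ord_recl in w1; rewrite big_ord_recl in uE.
set rho := \sum_(i < m) w (lift ord0 i) in w1.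
have rho0 : 0 <= rho by apply: sumr_ge0.
have [w00|w0n] := eqVneq (w ord0) 0.
  have [i Hi] : exists i, p (lift ord0 i) = u.
    apply: (IH (fun i => p (lift ord0 i)) (fun i => w (lift ord0 i))) => //.
      by move: w1; rewrite w00 add0r.
    by move: uE; rewrite w00 scale0r add0r.
  by exists (lift ord0 i).
have [r0|rn] := eqVneq rho 0.
  have wz : forall i, w (lift ord0 i) = 0.
    move=> i; exact: (psumr_eq0P (fun i _ => w0 (lift ord0 i)) r0 (isT : xpredT i)).
  move: uE; rewrite big1; last by move=> i _; rewrite wz scale0r.
  move: w1; rewrite r0 addr0 => -> ; rewrite scale1r addr0 => E.
  by move/eqP: p0u; rewrite E.
have w0p : 0 < w ord0 by rewrite lt_def w0n w0.
have rp : 0 < rho by rewrite lt_def rn rho0.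
set r := \sum_(i < m) (w (lift ord0 i) / rho) *: p (lift ord0 i).
have Cr : conv A r.
  exists m, (fun i => p (lift ord0 i)), (fun i => w (lift ord0 i) / rho); split => //.
  - by move=> i; apply: divr_ge0.
  - by rewrite -mulr_suml divff.
have E : u = w ord0 *: p ord0 + (1 - w ord0) *: r.
  have -> : 1 - w ord0 = rho by rewrite -w1; ring.
  rewrite uE /r scaler_sumr; congr (_ + _); apply: eq_bigr => i _.
  by rewrite scalerA mulrC divfK.
have t01 : 0 < w ord0 < 1 by rewrite w0p /=; lra.
have := (Hv.2 _ _ _ (in_conv1 (pA ord0)) Cr t01 E).1.
by move/eqP: p0u.
Qed.

Definition lft (y : pt) : 'rV[R]_(D + 1) := row_mx y (const_mx (-1)).

Lemma dotp_row (g y : pt) (c r : 'rV[R]_1) :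
  dotp (row_mx g c) (row_mx y r) = dotp g y + dotp c r.
Proof.
rewrite /dotp big_split_ord /=; congr (_ + _); apply: eq_bigr => i _.
  by rewrite !row_mxEl.
by rewrite !row_mxEr.
Qed.

Lemma expose (S : seq pt) u : is_vertex (cv S) u ->
  exists b : pt, forall s, s \in S -> s <> u -> dotp b s < dotp b u.
Proof.
move=> Hv.
set T := [seq s <- S | s != u].
set gens := map (fun s => lft (s - u)) T.
have nc : ~ in_cone gens (lft 0).
  move/in_cone_index => [m [p [w [pg w0 E]]]].
  have : forall i, exists s, s \in T /\ p i = lft (s - u).
    by move=> i; case/mapP: (pg i) => s sT ->; exists s.
  case/choice => sf Hsf.
  have Ew1 : \sum_i w i = 1.
    have := congr1 (fun M : 'rV_(D + 1) => M 0 (rshift D (ord0 : 'I_1))) E.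
    rewrite /= /lft row_mxEr mxE summxE.
    rewrite (eq_bigr (fun k => - w k)); last first.
      by move=> k _; rewrite mxE (proj2 (Hsf _)) /lft row_mxEr mxE mulrN1.
    by rewrite sumrN => /eqP; rewrite eqr_opp => /eqP ->.
  have Ez : \sum_i w i *: (sf i - u) = 0.
    apply/rowP => j.
    have := congr1 (fun M : 'rV_(D + 1) => M 0 (lshift 1 j)) E.
    rewrite /= /lft row_mxEl !mxE summxE => ->.
    rewrite summxE; apply: eq_bigr => i _.
    by rewrite !mxE (proj2 (Hsf _)) /lft row_mxEl !mxE.
  have Eu : u = \sum_i w i *: sf i.
    have -> : \sum_i w i *: sf i = \sum_i w i *: (sf i - u) + \sum_i w i *: u.
      by rewrite -big_split /=; apply: eq_bigr => i _; rewrite -scalerDr subrK.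
    by rewrite Ez add0r -scaler_suml Ew1 scale1r.
  have pA : forall i, [set x | x \in S] (sf i).
    by move=> i; have := proj1 (Hsf i); rewrite mem_filter => /andP [].
  have [i Hi] := ext_comb Hv pA w0 Ew1 Eu.
  by have := proj1 (Hsf i); rewrite mem_filter Hi eqxx.
have [G [Gs G0]] := farkas nc.
set g := lsubmx G; set c := rsubmx G.
have GE : G = row_mx g c by rewrite hsubmxK.
set k := dotp c (const_mx (-1)).
move: G0; rewrite GE /lft dotp_row dotp0r add0r -/k => k0.
exists (- g) => s sS su.
have := Gs (lft (s - u)) (map_f _ (_ : s \in T)).
rewrite mem_filter sS andbT => /(_ (introN eqP su)).
rewrite GE /lft dotp_row -/k dotpBr !dotpNl => H; lra.
Qed.

Lemma perturb (S : seq pt) a u s0 : s0 \in S ->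
  (forall s, s \in S -> s <> u -> dotp a s < dotp a u) ->
  exists a' w, [/\ w \in S,
    (forall s, s \in S -> s <> u -> dotp a' s < dotp a' u),
    (forall s, s \in S -> s <> w -> dotp a' w < dotp a' s) &
    (forall s, s \in S -> dotp a w <= dotp a s)].
Proof.
move=> s0S Hu.
have [w1 w1S Hw1] := argmin_seq (dotp a) s0S.
set S1 := [seq s <- S | dotp a s == dotp a w1].
have w1S1 : w1 \in S1 by rewrite mem_filter eqxx.
have [w wS1 Hw] := argmin_seq (fun s => - dotp s s) w1S1.
move: (wS1); rewrite mem_filter => /andP [/eqP aw wS].
have [e1 e10 He1] := @small_eps R _ (fun s => s != u)
  (fun s => dotp w u - dotp w s) (fun s => dotp a u - dotp a s) S
  (fun s sS su => ltac:(by rewrite subr_gt0; apply: Hu => //; apply/eqP)).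
have [e2 e20 He2] := @small_eps R _ (fun s => dotp a w < dotp a s)
  (fun s => dotp w s - dotp w w) (fun s => dotp a s - dotp a w) S
  (fun s sS ws => ltac:(by rewrite subr_gt0)).
set e := Order.min e1 e2.
have e0 : 0 < e by rewrite lt_min e10 e20.
have ee1 : e <= e1 by rewrite ge_min lexx.
have ee2 : e <= e2 by rewrite ge_min lexx orbT.
exists (a - e *: w), w; split => //.
- move=> s sS su; rewrite !dotpBl !dotpZl.
  have := He1 e e0 ee1 s sS (introN eqP su); lra.
- move=> s sS sw; rewrite !dotpBl !dotpZl.
  have [aws|] := ltP (dotp a w) (dotp a s).
    have := He2 e e0 ee2 s sS aws; lra.
  move=> asw; have Es : dotp a s = dotp a w.
    by apply/le_anti; rewrite asw aw Hw1.
  have sS1 : s \in S1 by rewrite mem_filter sS Es aw eqxx.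
  have Hs := Hw s sS1.
  have pos : 0 < dotp (w - s) (w - s).
    by apply: dotpxx_gt0; rewrite subr_eq0; apply/eqP => E; apply: sw.
  move: pos; rewrite !dotpBl !dotpBr (dotpC s w) => pos.
  rewrite Es; nra.
- by move=> s sS; rewrite aw Hw1.
Qed.

Lemma umax_of (Q : set pt) a u : Q u ->
  (forall x, Q x -> x <> u -> dotp a x <> dotp a u) ->
  (forall x, Q x -> dotp a x <= dotp a u) -> umax Q a u.
Proof.
move=> Qu H1 H2; split => // x Qx xu; rewrite lt_def H2 // andbT.
by apply/eqP => E; apply: (H1 x Qx xu); rewrite E.
Qed.

Lemma umax_le (Q : set pt) a u x : umax Q a u -> Q x -> dotp a x <= dotp a u.
Proof.
by move=> [Qu H] Qx; have [->//|xu] := eqVneq x u; apply/ltW/H => //; apply/eqP.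
Qed.

Lemma SA_intro (Q : set pt) a u w : umax Q a u -> umax Q (- a) w -> u <> w ->
  strictly_antipodal Q u w.
Proof.
move=> Hu Hw uw.
have awu : dotp a w < dotp a u by apply: Hu.2; [exact: Hw.1 | move=> E; apply: uw].
exists a, a, (dotp a u), (dotp a w), 1; split.
- split; first by apply/eqP => a0; move: awu; rewrite a0 !dotp0l ltxx.
  split; last by exists u; split => //; exact: Hu.1.
  by left => x Qx; apply: umax_le Hu Qx.
- split; first by apply/eqP => a0; move: awu; rewrite a0 !dotp0l ltxx.
  split; last by exists w; split => //; exact: Hw.1.
  by right => x Qx; have := umax_le Hw Qx; rewrite !dotpNl lerN2.
- by split; [exact: oner_neq0 | rewrite scale1r].
- move=> E; have : hyperplane a (dotp a u) u by [].
  by rewrite E /hyperplane /= => H; move: awu; rewrite H ltxx.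
split; apply/seteqP; split => x /=.
- case=> Hx Qx; apply/eqP/negP => /negP/eqP xu.
  by have := Hu.2 x Qx xu; rewrite Hx ltxx.
- by move=> ->; split => //; exact: Hu.1.
- case=> Hx Qx; apply/eqP/negP => /negP/eqP xw.
  by have := Hw.2 x Qx xw; rewrite !dotpNl ltrN2 Hx ltxx.
- by move=> ->; split => //; exact: Hw.1.
Qed.

Lemma SA_elim (Q : set pt) u w : strictly_antipodal Q u w ->
  u <> w /\ exists a, umax Q a u /\ umax Q (- a) w.
Proof.
move=> [a1 [a2 [b1 [b2 [c [[_ [s1 _]] [_ [s2 _]] [cn a2E] Hne [H1 H2]]]]]]].
have [Hb1 Qu] : dotp a1 u = b1 /\ Q u.
  by have : (hyperplane a1 b1 `&` Q) u by rewrite H1.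
have [Hb2 Qw] : dotp a2 w = b2 /\ Q w.
  by have : (hyperplane a2 b2 `&` Q) w by rewrite H2.
have A : forall x, Q x -> x <> u -> dotp a1 x <> dotp a1 u.
  move=> x Qx xu E; apply: xu.
  have : (hyperplane a1 b1 `&` Q) x by split => //; rewrite /hyperplane /= E.
  by rewrite H1.
have B : forall x, Q x -> x <> w -> dotp a1 x <> dotp a1 w.
  move=> x Qx xw E; apply: xw.
  have : (hyperplane a2 b2 `&` Q) x.
    by split => //; rewrite /hyperplane /= -Hb2 a2E !dotpZl E.
  by rewrite H2.
have uwne : dotp a1 w != dotp a1 u.
  apply/eqP => E; apply: Hne; apply/seteqP; split => x; rewrite /hyperplane /=.
    by move=> Hx; rewrite -Hb2 a2E !dotpZl Hx E Hb1.
  by rewrite -Hb2 a2E !dotpZl => /(mulfI cn); rewrite E Hb1.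
have uw : u <> w by move=> E; move: uwne; rewrite E eqxx.
split => //.
have s1' : (forall x, Q x -> dotp a1 x <= dotp a1 u) \/
           (forall x, Q x -> dotp a1 u <= dotp a1 x) by rewrite Hb1.
have s2' : (forall x, Q x -> dotp a1 x <= dotp a1 w) \/
           (forall x, Q x -> dotp a1 w <= dotp a1 x).
  have [c0|c0] := ltP 0 c.
    case: s2 => H; [left|right] => x Qx; have := H x Qx;
      by rewrite -Hb2 a2E !dotpZl ler_pM2l.
  have c0' : c < 0 by rewrite lt_neqAle cn c0.
  case: s2 => H; [right|left] => x Qx; have := H x Qx;
    by rewrite -Hb2 a2E !dotpZl ler_nM2l.
have [lt|gt] := ltP (dotp a1 w) (dotp a1 u).
  case: s1' => [S1|S1]; last by have := S1 w Qw; rewrite leNgt lt.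
  case: s2' => [S2|S2]; first by have := S2 u Qu; rewrite leNgt lt.
  exists a1; split; first exact: (umax_of Qu A S1).
  apply: umax_of => //.
    by move=> x Qx xw; rewrite !dotpNl => /oppr_inj; apply: B.
  by move=> x Qx; rewrite !dotpNl lerN2; apply: S2.
have lt : dotp a1 u < dotp a1 w by rewrite lt_neqAle gt eq_sym uwne.
case: s1' => [S1|S1]; first by have := S1 w Qw; rewrite leNgt lt.
case: s2' => [S2|S2]; last by have := S2 u Qu; rewrite leNgt lt.
exists (- a1); rewrite opprK; split; last exact: (umax_of Qw B S2).
apply: umax_of => //.
  by move=> x Qx xu; rewrite !dotpNl => /oppr_inj; apply: A.
by move=> x Qx; rewrite !dotpNl lerN2; apply: S1.
Qed.
End Poly.


Section Count.
Local Open Scope fset_scope.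
Local Open Scope nat_scope.
Variable T : choiceType.
Variable V : {fset T}.
Variable E : T -> T -> Prop.
Definition PP := [fset [fset u; v] | u in V, v in V & `[< E u v >]].

Lemma PPP p : p \in PP <-> exists a b, [/\ a \in V, b \in V, E a b & p = [fset a; b]].
Proof.
split.
  move/imfset2P => [a aV [b]]; rewrite !inE /= => /andP [bV /asboolP Eab] ->.
  by exists a, b.
case=> a [b [aV bV Eab ->]]; apply/imfset2P; exists a => //; exists b => //.
by rewrite !inE /= bV; apply/asboolP.
Qed.

Lemma sum_count (I : Type) (s : seq I) (P : pred I) :
  \sum_(x <- s) (P x : nat) = count P s.
Proof. by elim: s => [|x s IH]; rewrite ?big_nil ?big_cons ?IH. Qed.

Definition deg u := \sum_(p <- PP) (u \in (p : {fset T}) : nat).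

Lemma sum_deg : (forall u v, E u v -> u <> v) ->
  \sum_(u <- V) deg u = (2 * #|` PP|)%N.
Proof.
move=> irr; rewrite /deg exchange_big /=.
transitivity (\sum_(p <- PP) 2)%N; last first.
  by rewrite big_const_seq count_predT iter_addn_0 mulnC.
apply: eq_big_seq => p /PPP [a [b [aV bV Eab ->]]].
have ab : a != b by apply/eqP; apply: irr.
transitivity (\sum_(u <- V) ((u == a) + (u == b)))%N.
  apply: eq_bigr => u _; rewrite !inE.
  by case: (eqVneq u a) => [->|]; rewrite ?(negPf ab) //= addn0.
rewrite big_split /= !(sum_count V (pred1 _)) !count_uniq_mem ?fset_uniq //.
by rewrite aV bV.
Qed.

Lemma deg_count u : deg u = count (fun p : {fset T} => u \in p) PP.
Proof. by rewrite /deg sum_count. Qed.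

Lemma deg_ge1 u v : u \in V -> v \in V -> E u v -> (0 < deg u)%N.
Proof.
move=> uV vV Euv; rewrite deg_count -has_count; apply/hasP.
exists [fset u; v]; first by apply/PPP; exists u, v.
by rewrite !inE eqxx.
Qed.

Lemma deg_ge2 u w1 w2 : (forall u v, E u v -> u <> v) ->
  u \in V -> w1 \in V -> w2 \in V -> E u w1 -> E u w2 -> w1 <> w2 -> (1 < deg u)%N.
Proof.
move=> irr uV w1V w2V E1 E2 w12.
have n1 : [fset u; w1] != [fset u; w2].
  apply/eqP => H; have : w2 \in [fset u; w1] by rewrite H !inE eqxx orbT.
  rewrite !inE => /orP [/eqP H2|/eqP H2]; first by apply: (irr u w2).
  by apply: w12.
rewrite deg_count -size_filter.
have : (size [:: [fset u; w1]; [fset u; w2]] <= size [seq p <- PP | u \in p])%N.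
  apply: uniq_leq_size; first by rewrite /= andbT inE.
  move=> p; rewrite !inE mem_filter => /orP [] /eqP ->; rewrite !inE eqxx /=.
    by apply/PPP; exists u, w1.
  by apply/PPP; exists u, w2.
by [].
Qed.

Lemma deg_eq1 u v : (forall u v, E u v -> E v u) -> u \in V -> v \in V -> E u v ->
  (forall w, w \in V -> E u w -> w = v) -> deg u = 1%N.
Proof.
move=> sym uV vV Euv Hu; rewrite deg_count.
have pP : [fset u; v] \in PP by apply/PPP; exists u, v.
transitivity (count_mem [fset u; v] PP); last first.
  by rewrite count_uniq_mem ?fset_uniq // pP.
apply: eq_in_count => p /PPP [a [b [aV bV Eab ->]]] /=.
apply/idP/eqP; last by move=> ->; rewrite !inE eqxx.
rewrite !inE => /orP [/eqP ua|/eqP ub]; subst u; first by rewrite (Hu b bV Eab).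
by rewrite (Hu a aV (sym _ _ Eab)) fsetUC.
Qed.

Lemma count_pairs : (forall u v, E u v -> E v u) -> (forall u v, E u v -> u <> v) ->
  (forall u, u \in V -> exists v, v \in V /\ E u v) ->
  (2 * #|` PP| = #|` V|)%N <->
  (forall u w1 w2, u \in V -> w1 \in V -> w2 \in V -> E u w1 -> E u w2 -> w1 = w2).
Proof.
move=> sym irr nb.
have cardV : #|` V| = \sum_(u <- V) 1%N.
  by rewrite big_const_seq count_predT iter_addn_0 mul1n.
have ge1 : forall u, u \in V -> (0 < deg u)%N.
  by move=> u /[dup] uV /nb [v [vV Euv]]; apply: deg_ge1 Euv.
rewrite -sum_deg // cardV.
have split : \sum_(u <- V) deg u = (\sum_(u <- V) 1 + \sum_(u <- V) (deg u).-1)%N.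
  rewrite -big_split /=; apply: eq_big_seq => u uV.
  by rewrite add1n prednK // ge1.
split.
  move=> H u w1 w2 uV w1V w2V E1 E2; apply/eqP/negP => /negP /eqP w12.
  have := deg_ge2 irr uV w1V w2V E1 E2 w12.
  move: H; rewrite split => /eqP; rewrite -[X in _ == X]addn0 eqn_add2l.
  rewrite sum_nat_seq_eq0 => /allP /(_ u uV) /=.
  by case: (deg u) => [|[|]].
move=> H; apply: eq_big_seq => u uV.
have [v [vV Euv]] := nb u uV.
apply: (deg_eq1 sym uV vV Euv) => w wV Euw; exact: H u w v uV wV vV Euw Euv.
Qed.
End Count.


Section Main.
Variable R : realType.
Variable D : nat.
Notation pt := 'rV[R]_D.

Lemma SA_sym (Q : set pt) u w : strictly_antipodal Q u w -> strictly_antipodal Q w u.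
Proof.
case/SA_elim => uw [a [Hu Hw]]; apply: (@SA_intro _ _ Q (- a)) => //.
- by rewrite opprK.
- by move=> E; apply: uw.
Qed.

Lemma SA_vert (Q : set pt) u w : strictly_antipodal Q u w -> is_vertex Q w.
Proof. by case/SA_elim => _ [a [_ Hw]]; apply: umax_vertex Hw. Qed.

Lemma cv_nonempty (S : seq pt) x : cv S x -> exists s0, s0 \in S.
Proof.
case=> [[|m] [p [w [pS _ w1 _]]]].
  by move: w1; rewrite big_ord0 => /eqP; rewrite eq_sym oner_eq0.
by exists (p ord0); apply: pS.
Qed.

Lemma cv_single (S : seq pt) u q : (forall s, s \in S -> s = u) -> cv S q -> q = u.
Proof.
move=> Hs [m [p [w [pS _ w1 ->]]]].
rewrite (eq_bigr (fun i => w i *: u)); last by move=> i _; rewrite (Hs _ (pS i)).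
by rewrite -scaler_suml w1 scale1r.
Qed.

Lemma partner (S : seq pt) u : is_vertex (cv S) u ->
  (exists w, is_vertex (cv S) w /\ strictly_antipodal (cv S) u w) \/
  (forall q, cv S q -> q = u).
Proof.
move=> Hv; have Qu := Hv.1.
have [s0 s0S] := cv_nonempty Qu.
have [b Hb] := expose Hv.
have [a' [w [wS Hmax Hmin Hbw]]] := perturb s0S Hb.
have [wu|wu] := eqVneq w u.
  right => q; apply: cv_single => s sS; apply/eqP/negP => /negP /eqP su.
  by have := Hb s sS su; have := Hbw s sS; rewrite wu leNgt => /negP.
left; exists w.
have Uu : umax (cv S) a' u by apply: cv_umax.
have Uw : umax (cv S) (- a') w.
  apply: cv_umax; first exact: in_cv.
  by move=> s sS sw; rewrite !dotpNl ltrN2; apply: Hmin.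
split; first exact: umax_vertex Uw.
by apply: SA_intro Uu Uw _ => E; move/eqP: wu; rewrite E.
Qed.

Lemma cone_lemma (S : seq pt) u v : is_vertex (cv S) u -> is_vertex (cv S) v ->
  (forall w, is_vertex (cv S) w -> strictly_antipodal (cv S) v w -> w = u) ->
  forall (lam : R) q, 0 <= lam -> cv S q ->
  exists lam' q', [/\ 0 <= lam', cv S q' & - (lam *: (q - u)) = lam' *: (q' - v)].
Proof.
move=> Vu Vv Huniq lam q lam0 Qq.
set y := - (lam *: (q - u)).
set T := [seq s - v | s <- S].
case: (pselect (in_cone T y)) => [Hc|Hc].
  have [m [p [wt [pT w0 E]]]] := in_cone_index Hc.
  have : forall i, exists s, s \in S /\ p i = s - v.
    by move=> i; case/mapP: (pT i) => s sS ->; exists s.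
  case/choice => sf Hsf.
  have E' : y = \sum_i wt i *: sf i - (\sum_i wt i) *: v.
    rewrite E scaler_suml -sumrB; apply: eq_bigr => i _.
    by rewrite (proj2 (Hsf i)) scalerBr.
  set M := \sum_i wt i in E'.
  have M0 : 0 <= M by apply: sumr_ge0.
  have [Mz|Mn] := eqVneq M 0.
    exists 0, v; split => //; first exact: Vv.1.
    rewrite scale0r E' Mz scale0r subr0 big1 // => i _.
    by rewrite (psumr_eq0P (fun i _ => w0 i) Mz (isT : xpredT i)) scale0r.
  exists M, (\sum_i (wt i / M) *: sf i); split => //.
    exists m, sf, (fun i => wt i / M); split => //.
    - by move=> i; exact: (proj1 (Hsf i)).
    - by move=> i; apply: divr_ge0.
    - by rewrite -mulr_suml divff.
  rewrite E' scalerBr scaler_sumr; congr (_ - _); apply: eq_bigr => i _.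
  by rewrite scalerA mulrC divfK.
have [g [gT gy]] := farkas Hc.
have gS : forall s, s \in S -> dotp g v <= dotp g s.
  by move=> s sS; have := gT _ (map_f (fun s => s - v) sS); rewrite dotpBr subr_ge0.
have gqu : dotp g u < dotp g q.
  move: gy; rewrite /y dotpNr dotpZr dotpBr oppr_lt0 => H.
  rewrite -subr_gt0; apply: contraTT H; rewrite -!leNgt => H.
  by apply: mulr_ge0_le0.
have [ss [ssS gss]] : exists ss, ss \in S /\ dotp g u < dotp g ss.
  case: (pselect (exists ss, ss \in S /\ dotp g u < dotp g ss)) => // Hn.
  have : dotp g q <= dotp g u.
    apply: cv_le Qq => s sS; rewrite leNgt; apply/negP => H; apply: Hn.
    by exists s.
  by rewrite leNgt gqu.
have [b Hb] := expose Vv.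
have [e e0 He] := @small_eps R _ predT (fun s => dotp b s - dotp b u)
  (fun s => dotp g s - dotp g u) [:: ss]
  (fun s sS _ => ltac:(by move: sS; rewrite inE => /eqP ->; rewrite subr_gt0)).
have He' := He e e0 (lexx e) ss (mem_head _ _) isT.
set h0 := g - e *: b.
have h0max : forall s, s \in S -> s <> v -> dotp (- h0) s < dotp (- h0) v.
  move=> s sS sv; rewrite !dotpNl ltrN2 !dotpBl !dotpZl.
  have := Hb s sS sv; rewrite -(ltr_pM2l e0) => H.
  have := gS s sS; lra.
have [a' [w [wS Hmax Hmin Hw]]] := perturb ssS h0max.
have hw := Hw ss ssS.
move: hw; rewrite !dotpNl lerN2 => hw.
have huw : dotp h0 u < dotp h0 w.
  apply: lt_le_trans hw; rewrite /h0 !dotpBl !dotpZl; lra.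
have Uv : umax (cv S) a' v by apply: cv_umax => //; exact: Vv.1.
have Uw : umax (cv S) (- a') w.
  apply: cv_umax; first exact: in_cv.
  by move=> s sS sw; rewrite !dotpNl ltrN2; apply: Hmin.
have Uh : umax (cv S) (- h0) v by apply: cv_umax => //; exact: Vv.1.
have wv : v <> w.
  move=> E; have := umax_le Uh Vu.1; rewrite !dotpNl lerN2 E.
  by rewrite leNgt huw.
have := Huniq w (umax_vertex Uw) (SA_intro Uv Uw wv).
by move=> E; move: huw; rewrite E ltxx.
Qed.
End Main.


Lemma cone_eq (R : realType) (D : nat) (S : seq 'rV[R]_D) u v :
  is_vertex (cv S) u -> is_vertex (cv S) v ->
  (forall w, is_vertex (cv S) w -> strictly_antipodal (cv S) v w -> w = u) ->
  (forall w, is_vertex (cv S) w -> strictly_antipodal (cv S) u w -> w = v) ->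
  [set x | exists2 c, supp_cone (cv S) u c & x = c - u] =
  [set x | exists2 c, supp_cone (cv S) v c & x = v - c].
Proof.
move=> Vu Vv Hv Hu; apply/seteqP; split => x /=.
  case=> c [lam [q [lam0 Qq ->]]] ->.
  have [lam' [q' [l0 Qq' E]]] := cone_lemma Vu Vv Hv lam0 Qq.
  exists (v + lam' *: (q' - v)); first by exists lam', q'.
  rewrite -E; apply/rowP => i; rewrite !mxE; ring.
case=> c [lam [q [lam0 Qq ->]]] ->.
have [lam' [q' [l0 Qq' E]]] := cone_lemma Vv Vu Hu lam0 Qq.
exists (u + lam' *: (q' - u)); first by exists lam', q'.
move: E => /(congr1 (fun z => - z)); rewrite opprK => ->.
apply/rowP => i; rewrite !mxE; ring.
Qed.

Unset Implicit Arguments.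

Theorem lemma6 (R : realType) (D : nat) (Q : set 'rV[R]_D) (V : {fset 'rV[R]_D}) :
  is_polytope Q ->
  full_dim Q ->
  (forall v, is_vertex Q v <-> v \in V) ->
  locally_point_symmetric Q V <->
  (2 * #|` antipodal_pairs Q V| = #|` V|)%N.
Proof.
move=> [S ->] _ HV.
have -> : conv [set x | x \in S] = cv S by [].
have -> : antipodal_pairs (cv S) V = PP V (strictly_antipodal (cv S)) by [].
set E := strictly_antipodal (cv S).
have sym : forall u v, E u v -> E v u by move=> u v; apply: SA_sym.
have irr : forall u v, E u v -> u <> v by move=> u v /SA_elim [].
have EV : forall u v, E u v -> v \in V by move=> u v /SA_vert /HV.
split.
  case=> p Hp.
  have uniq : forall u w, u \in V -> E u w -> w = p u.
    move=> u w uV Euw.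
    have [puV pun ppu SAp Cone] := Hp u uV.
    have [_ [a [Ua Uw]]] := SA_elim Euw.
    have Up : umax (cv S) (- a) (p u).
      split; first exact: (proj2 (HV _) puV).1.
      move=> q Qq qp; rewrite !dotpNl ltrN2.
      have : [set x | exists2 c, supp_cone (cv S) (p u) c & x = p u - c] (p u - q).
        exists q => //; exists 1, q; split => //.
        by apply/rowP => i; rewrite !mxE; ring.
      rewrite -Cone => -[c [lam [q' [lam0 Qq' ->]]]].
      rewrite addrAC subrr add0r => E1.
      have := congr1 (dotp a) E1; rewrite dotpBr dotpZr dotpBr => E2.
      have Hq' := umax_le Ua Qq'.
      rewrite lt_neqAle; apply/andP; split; last first.
        rewrite -subr_ge0 -oppr_le0 opprB E2; apply: mulr_ge0_le0 => //.
        by rewrite subr_le0.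
      apply/eqP => E3; apply: qp.
      move: E2; rewrite E3 subrr => /esym /eqP; rewrite mulf_eq0 => /orP [/eqP l0|].
        by move: E1; rewrite l0 scale0r => /eqP; rewrite subr_eq0 => /eqP.
      rewrite subr_eq0 => /eqP aq.
      have q'u : q' = u.
        apply/eqP/negP => /negP /eqP q'u; have := Ua.2 q' Qq' q'u.
        by rewrite aq ltxx.
      by move: E1; rewrite q'u subrr scaler0 => /eqP; rewrite subr_eq0 => /eqP.
    apply/eqP/negP => /negP /eqP wp.
    have h1 := Uw.2 (p u) Up.1 (fun E => wp (esym E)).
    have h2 := Up.2 w Uw.1 wp.
    by move: h1; rewrite ltNge (ltW h2).
  apply/(count_pairs sym irr).
    move=> u uV; have [puV _ _ SAp _] := Hp u uV; by exists (p u).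
  move=> u w1 w2 uV _ _ E1 E2; by rewrite (uniq u w1 uV E1) (uniq u w2 uV E2).
move=> Hc.
have nb : forall u, u \in V -> exists v, v \in V /\ E u v.
  move=> u uV; case: (partner ((HV u).2 uV)) => [[w [Vw Euw]]|Hs].
    by exists w; split => //; apply/HV.
  exfalso; move: Hc.
  have -> : #|` PP V E| = 0%N.
    apply/eqP; rewrite cardfs_eq0; apply/eqP/fsetP => p; rewrite inE.
    apply/negP => /PPP [a [b [aV bV Eab _]]].
    have [ab [c [Ua Ub]]] := SA_elim Eab.
    by apply: ab; rewrite (Hs _ Ua.1) (Hs _ Ub.1).
  move=> /esym /eqP; rewrite muln0 cardfs_eq0 => /eqP V0.
  by move: uV; rewrite V0 inE.
have Hu := proj1 (count_pairs sym irr nb) Hc.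
have : forall u, exists w, u \in V -> w \in V /\ E u w.
  move=> u; case: (boolP (u \in V)) => [/nb [w Hw]|uV]; first by exists w.
  by exists u.
case/choice => p Hp.
exists p => u uV.
have [puV Eu] := Hp u uV.
have [ppV Epu] := Hp (p u) puV.
have ppu : p (p u) = u by apply: (Hu (p u)) => //; apply: sym.
split.
- exact: puV.
- by apply/eqP => E0; exact: (irr u (p u) Eu (esym E0)).
- exact: ppu.
- exact: Eu.
- apply: cone_eq; [exact/HV | exact/HV | |].
    move=> w /HV wV Ew; exact: (Hu (p u) w u puV wV uV Ew (sym _ _ Eu)).
  move=> w /HV wV Ew; exact: (Hu u w (p u) uV wV puV Ew Eu).
Qed.
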